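(* The Burgers transform does not preserve pointwise products: the identity $\mathcal{B}[f\cdot g](x,y) = \mathcal{B}[f](x,y) \cdot \mathcal{B}[g](x,y)$ fails in general at points with $x \neq 0$ (for holomorphic seeds $f,g$ with values in $\mathbb{C}_+$ whose product also takes values in $\mathbb{C}_+$).
   Context: $\mathbb{C}_+$ is the upper half-plane. For $U\subseteq\mathbb{C}$ open and connected with $U\cap\mathbb{R}$ containing an interval and $f\colon U\to\mathbb{C}_+$ holomorphic, the Burgers transform $\mathcal{B}[f]\colon\Omega_f\to\mathbb{C}_+$ is defined implicitly by $\mathcal{B}[f](x,y) = f(y - \mathcal{B}[f](x,y)\, x)$, where $\Omega_f \subseteq \mathbb{R}^2$ is the maximal open set on which this equation admits a unique $C^1$ solution with positive imaginary part. *)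

(* Defs.v *)
From Stdlib Require Import Reals.
From Coquelicot Require Import Coquelicot.
Open Scope R_scope.

Definition in_Cplus (z : C) : Prop := 0 < Im z.

Definition connected_C (U : C -> Prop) : Prop :=
  forall A B : C -> Prop, open A -> open B ->
    (forall z, U z -> A z \/ B z) ->
    (forall z, U z -> A z -> B z -> False) ->
    (exists z, U z /\ A z) -> (exists z, U z /\ B z) -> False.

Definition admissible_domain (U : C -> Prop) : Prop :=
  open U /\ connected_C U /\
  exists a b : R, a < b /\ forall t : R, a < t < b -> U (RtoC t).

Definition holo_Cplus (U : C -> Prop) (f : C -> C) : Prop :=
  forall z, U z -> ex_derive (K:=C_AbsRing) (V:=C_NormedModule) f z /\ in_Cplus (f z).

Definition C1_on (Om : R * R -> Prop) (B : R * R -> C) : Prop :=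
  exists Dx Dy : R * R -> C,
    (forall p, Om p ->
       is_derive (K:=R_AbsRing) (V:=C_R_NormedModule) (fun t => B (t, snd p)) (fst p) (Dx p) /\
       is_derive (K:=R_AbsRing) (V:=C_R_NormedModule) (fun t => B (fst p, t)) (snd p) (Dy p)) /\
    (forall p, Om p ->
       @continuous (prod_UniformSpace R_UniformSpace R_UniformSpace) C_UniformSpace Dx p /\
       @continuous (prod_UniformSpace R_UniformSpace R_UniformSpace) C_UniformSpace Dy p).

Definition burgers_sol (U : C -> Prop) (f : C -> C) (Om : R * R -> Prop)
    (B : R * R -> C) : Prop :=
  C1_on Om B /\
  forall p, Om p ->
    in_Cplus (B p) /\
    U (Cminus (RtoC (snd p)) (Cmult (B p) (RtoC (fst p)))) /\
    B p = f (Cminus (RtoC (snd p)) (Cmult (B p) (RtoC (fst p)))).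

(* Om is an open set on which the equation has a unique C^1 solution B.
   Any such Om lies in the maximal domain Omega_f and B = Burgers[f] on Om. *)
Definition burgers_unique_on (U : C -> Prop) (f : C -> C) (Om : R * R -> Prop)
    (B : R * R -> C) : Prop :=
  @open (prod_UniformSpace R_UniformSpace R_UniformSpace) Om /\
  burgers_sol U f Om B /\
  forall B', burgers_sol U f Om B' -> forall p, Om p -> B' p = B p.

(* Main.v *)
Require Import Defs.
From Stdlib Require Import Reals Lra Psatz ClassicalEpsilon ClassicalDescription.
From Coquelicot Require Import Coquelicot.
Open Scope R_scope.

Lemma is_derive_pair_C (f g : R -> R) x df dg :
  is_derive f x df -> is_derive g x dg ->
  is_derive (K:=R_AbsRing) (V:=C_R_NormedModule) (fun t => (f t, g t)) x (df, dg).
Proof.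
  intros Hf Hg.
  unfold is_derive.
  apply (filterdiff_comp_2 (K:=R_AbsRing) (T:=R_NormedModule) (U:=R_NormedModule) (V:=R_NormedModule)
     (W:=C_R_NormedModule) f g (fun a b => (a,b)) _ _ (fun a b => (a,b)) Hf Hg).
  apply filterdiff_ext_lin with (l1 := fun t => t); [apply filterdiff_ext with (f := fun t => t)|].
  - intros [a b]; reflexivity.
  - apply filterdiff_id.
  - intros [a b]; reflexivity.
Qed.

Lemma continuous_pair_C (f g : R * R -> R) p :
  @continuous (prod_UniformSpace R_UniformSpace R_UniformSpace) R_UniformSpace f p ->
  @continuous (prod_UniformSpace R_UniformSpace R_UniformSpace) R_UniformSpace g p ->
  @continuous (prod_UniformSpace R_UniformSpace R_UniformSpace) C_UniformSpace (fun q => (f q, g q)) p.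
Proof.
  intros Hf Hg P [eps HP].
  specialize (Hf (ball (f p) eps) (locally_ball _ _)).
  specialize (Hg (ball (g p) eps) (locally_ball _ _)).
  unfold filtermap in *.
  generalize (filter_and _ _ Hf Hg).
  apply filter_imp. intros q [H1 H2]. apply HP. split; assumption.
Qed.

Lemma ballR (x e y : R) : @ball R_UniformSpace x e y <-> Rabs (y - x) < e.
Proof. reflexivity. Qed.
Lemma ballC (x y : C) e : @ball C_UniformSpace x e y <-> Rabs (fst y - fst x) < e /\ Rabs (snd y - snd x) < e.
Proof. reflexivity. Qed.
Lemma ballP (x y : R*R) e : @ball (prod_UniformSpace R_UniformSpace R_UniformSpace) x e y <-> Rabs (fst y - fst x) < e /\ Rabs (snd y - snd x) < e.
Proof. reflexivity. Qed.

Lemma Cminus_eq (z w : C) : Cminus z w = (fst z - fst w, snd z - snd w).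
Proof. destruct z, w; reflexivity. Qed.
Lemma Cmult_eq (z w : C) : Cmult z w = (fst z * fst w - snd z * snd w, fst z * snd w + snd z * fst w).
Proof. destruct z, w; reflexivity. Qed.
Lemma Cplus_eq (z w : C) : Cplus z w = (fst z + fst w, snd z + snd w).
Proof. destruct z, w; reflexivity. Qed.

Lemma convex_lt c a b t: 0 <= t <= 1 -> c < a -> c < b -> c < a + t * (b - a).
Proof.
intros. destruct (Rle_dec a b).
- assert (0 <= t * (b - a)) by (apply Rmult_le_pos; lra). lra.
- assert (t * (b - a) >= 1 * (b-a)) by nra. lra. Qed.

Definition UU (z : C) : Prop := -1/2 < snd z /\ -1/2 < fst z + snd z.
Definition ff (z : C) : C := Cplus z (0,1).
Definition gg (z : C) : C := (1,1).
Definition OO (p : R * R) : Prop := -1/10 < fst p < 1/10 /\ -1/10 < snd p < 1/10.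

Lemma UU_open : @open C_UniformSpace UU.
Proof.
  intros z [H1 H2].
  assert (He : 0 < Rmin (snd z + 1/2) (fst z + snd z + 1/2) / 3).
  { apply Rmin_case; lra. }
  exists (mkposreal _ He). intros y Hy. destruct (proj1 (ballC z y _) Hy) as [Ha Hb]. cbn [pos] in Ha, Hb.
  generalize (Rmin_l (snd z + 1/2) (fst z + snd z + 1/2)) (Rmin_r (snd z + 1/2) (fst z + snd z + 1/2)); intros.
  apply Rabs_def2 in Ha; apply Rabs_def2 in Hb. unfold UU. split; lra.
Qed.

Lemma UU_connected : connected_C UU.
Proof.
  intros A B oA oB cov disj [z [Uz Az]] [w [Uw Bw]].
  set (p := fun t : R => (fst z + t * (fst w - fst z), snd z + t * (snd w - snd z)) : C).
  assert (Hp : forall a e, 0 < e -> exists d, 0 < d /\ forall u, Rabs (u - a) < d -> @ball C_UniformSpace (p a) e (p u)).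
  { intros a e He.
    set (k := 1 + Rabs (fst w - fst z) + Rabs (snd w - snd z)).
    assert (Hk : 0 < k) by (unfold k; generalize (Rabs_pos (fst w - fst z)) (Rabs_pos (snd w - snd z)); lra).
    exists (e / k). split. apply Rdiv_lt_0_compat; lra.
    intros u Hu. apply ballC. unfold p; cbn [fst snd].
    apply Rlt_div_r in Hu; [|lra].
    replace (fst z + u * (fst w - fst z) - (fst z + a * (fst w - fst z))) with ((u - a) * (fst w - fst z)) by ring.
    replace (snd z + u * (snd w - snd z) - (snd z + a * (snd w - snd z))) with ((u - a) * (snd w - snd z)) by ring.
    rewrite !Rabs_mult.
    generalize (Rabs_pos (fst w - fst z)) (Rabs_pos (snd w - snd z)) (Rabs_pos (u - a)); intros.
    unfold k in Hu. split; nra. }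
  assert (HU : forall t, 0 <= t <= 1 -> UU (p t)).
  { intros t Ht. destruct Uz, Uw. unfold UU, p; simpl. clear Hp; subst p; clear -Ht H H0 H1 H2; cbn [fst snd]; split.
    apply convex_lt; auto.
    replace (fst z + t * (fst w - fst z) + (snd z + t * (snd w - snd z))) with
     ((fst z + snd z) + t * ((fst w + snd w) - (fst z + snd z))) by ring.
    apply convex_lt; auto. }
  set (chi := fun t => if excluded_middle_informative (A (p t)) then 0 else 1).
  assert (Hloc : forall S : C -> Prop, open S -> forall a, S (p a) -> exists d, 0 < d /\ forall u, Rabs (u - a) < d -> S (p u)).
  { intros S oS a Sa. destruct (oS _ Sa) as [e He].
    destruct (Hp a e (cond_pos e)) as [d [Hd Hd']]. exists d. split; auto. }
  assert (Hc : forall a, 0 <= a <= 1 -> continuity_pt (fun t => chi t - 1/2) a).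
  { intros a Ha.
    assert (Hev : exists d, 0 < d /\ forall u, Rabs (u - a) < d -> chi u = chi a).
    { destruct (Hloc UU UU_open a (HU a Ha)) as [d1 [Hd1 H1]].
      unfold chi. destruct (excluded_middle_informative (A (p a))) as [Ha'|Ha'].
      - destruct (Hloc A oA a Ha') as [d [Hd H]]. exists d; split; auto.
        intros u Hu. destruct (excluded_middle_informative (A (p u))); [reflexivity|].
        exfalso; auto.
      - assert (Bpa : B (p a)) by (destruct (cov _ (HU a Ha)); tauto).
        destruct (Hloc B oB a Bpa) as [d [Hd H]]. exists (Rmin d d1); split.
        apply Rmin_case; lra.
        intros u Hu. destruct (excluded_middle_informative (A (p u))); [|reflexivity].
        exfalso. apply (disj (p u)); auto.
        apply H1. eapply Rlt_le_trans; [apply Hu| apply Rmin_r].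
        apply H. eapply Rlt_le_trans; [apply Hu| apply Rmin_l]. }
    destruct Hev as [d [Hd Hev]].
    intros e He. exists d. split; auto. intros u [_ Hu]. simpl in Hu. unfold R_dist in Hu.
    simpl. unfold R_dist. rewrite Hev; auto.
    replace (chi a - 1/2 - (chi a - 1/2)) with 0 by ring. rewrite Rabs_R0. lra. }
  assert (p0 : p 0 = z) by (unfold p; destruct z; simpl; f_equal; ring).
  assert (p1 : p 1 = w) by (unfold p; destruct z, w; simpl; f_equal; ring).
  assert (c0 : chi 0 - 1/2 < 0).
  { unfold chi. destruct (excluded_middle_informative (A (p 0))); [lra|].
    rewrite p0 in n. contradiction. }
  assert (c1 : 0 < chi 1 - 1/2).
  { unfold chi. destruct (excluded_middle_informative (A (p 1))); [|lra].
    rewrite p1 in a. exfalso. apply (disj w); auto. }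
  destruct (Ranalysis5.IVT_interv (fun t => chi t - 1/2) 0 1 Hc ltac:(lra) c0 c1) as [t [_ Ht]].
  revert Ht. unfold chi. destruct (excluded_middle_informative (A (p t))); lra.
Qed.

Ltac cont_tac :=
  unfold Rdiv, Rminus;
  repeat first [ apply continuity_2d_pt_mult | apply continuity_2d_pt_plus | apply continuity_2d_pt_opp
  | apply continuity_2d_pt_inv | apply continuity_2d_pt_const | apply continuity_2d_pt_id1 | apply continuity_2d_pt_id2].

Lemma cont2 (F : R -> R -> R) p : continuity_2d_pt F (fst p) (snd p) ->
  @continuous (prod_UniformSpace R_UniformSpace R_UniformSpace) R_UniformSpace (fun q : R*R => F (fst q) (snd q)) p.
Proof. destruct p as [x y]; simpl. intros H. apply continuity_2d_pt_filterlim in H. exact H. Qed.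

Lemma C1_pair (Om : R * R -> Prop) (b1 b2 d1x d2x d1y d2y : R -> R -> R) :
 (forall x y, Om (x,y) -> is_derive (fun t => b1 t y) x (d1x x y) /\ is_derive (fun t => b2 t y) x (d2x x y)
    /\ is_derive (fun t => b1 x t) y (d1y x y) /\ is_derive (fun t => b2 x t) y (d2y x y)) ->
 (forall x y, Om (x,y) -> continuity_2d_pt d1x x y /\ continuity_2d_pt d2x x y
    /\ continuity_2d_pt d1y x y /\ continuity_2d_pt d2y x y) ->
 C1_on Om (fun p => (b1 (fst p) (snd p), b2 (fst p) (snd p))).
Proof.
  intros Hd Hc.
  exists (fun q => (d1x (fst q) (snd q), d2x (fst q) (snd q))).
  exists (fun q => (d1y (fst q) (snd q), d2y (fst q) (snd q))).
  split.
  - intros [x y] Hp. destruct (Hd x y Hp) as [H1 [H2 [H3 H4]]]. simpl.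
    split; apply is_derive_pair_C; assumption.
  - intros [x y] Hp. destruct (Hc x y Hp) as [H1 [H2 [H3 H4]]].
    split; apply continuous_pair_C; apply cont2; assumption.
Qed.

Lemma OO_open : @open (prod_UniformSpace R_UniformSpace R_UniformSpace) OO.
Proof.
  intros [x y] [[H1 H2] [H3 H4]]. simpl in *.
  assert (He : 0 < Rmin (Rmin (x + 1/10) (1/10 - x)) (Rmin (y + 1/10) (1/10 - y)) / 2).
  { repeat apply Rmin_case; lra. }
  exists (mkposreal _ He). intros [u v] Hb.
  destruct (proj1 (ballP (x,y) (u,v) _) Hb) as [Ha Hb']. cbn [pos fst snd] in Ha, Hb'.
  apply Rabs_def2 in Ha; apply Rabs_def2 in Hb'.
  generalize (Rmin_l (Rmin (x + 1/10) (1/10 - x)) (Rmin (y + 1/10) (1/10 - y)))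
    (Rmin_r (Rmin (x + 1/10) (1/10 - x)) (Rmin (y + 1/10) (1/10 - y)))
    (Rmin_l (x + 1/10) (1/10 - x)) (Rmin_r (x + 1/10) (1/10 - x))
    (Rmin_l (y + 1/10) (1/10 - y)) (Rmin_r (y + 1/10) (1/10 - y)); intros.
  unfold OO; simpl. lra.
Qed.

Definition Bf (p : R * R) : C := (snd p / (1 + fst p), 1 / (1 + fst p)).
Definition Bg (p : R * R) : C := (1, 1).
Definition QQ (x : R) := 1 + 2 * x + 2 * x * x.
Definition Bfg (p : R * R) : C :=
  ((snd p - 1 + 2 * fst p * snd p) / QQ (fst p), (snd p + 1 + 2 * fst p) / QQ (fst p)).

Lemma QQ_pos x : 0 < QQ x.
Proof. unfold QQ. nra. Qed.

Lemma affine_der (c k z : C) : exists l, is_derive (K:=C_AbsRing) (V:=C_NormedModule) (fun t => Cmult (Cplus t c) k) z l.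
Proof.
  pose proof (is_derive_scal_l (K:=C_AbsRing) (V:=C_NormedModule) (fun t => plus t (c:C_AbsRing)) z _ (k:C)
    (is_derive_plus _ _ z _ _ (is_derive_id z) (is_derive_const _ z))) as H.
  eexists. eapply is_derive_ext; [|exact H]. intros t. reflexivity.
Qed.

Lemma ff_der z : exists l, is_derive (K:=C_AbsRing) (V:=C_NormedModule) ff z l.
Proof.
  destruct (affine_der (0,1) (1,0) z) as [l Hl]. exists l.
  eapply is_derive_ext; [|exact Hl]. intros t. unfold ff. rewrite Cmult_eq, !Cplus_eq.
  destruct t; simpl. f_equal; ring.
Qed.

Lemma holo_ff : holo_Cplus UU ff.
Proof.
  intros z [H1 H2]. split.
  - apply ff_der.
  - unfold in_Cplus, ff. rewrite Cplus_eq. simpl. lra.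
Qed.

Lemma holo_gg : holo_Cplus UU gg.
Proof.
  intros z _. split.
  - exists zero. apply is_derive_const.
  - unfold in_Cplus, gg. simpl. lra.
Qed.

Lemma holo_fg : holo_Cplus UU (fun z => Cmult (ff z) (gg z)).
Proof.
  intros z [H1 H2]. split.
  - destruct (affine_der (0,1) (1,1) z) as [l Hl]. exists l.
    eapply is_derive_ext; [|exact Hl]. intros t. reflexivity.
  - unfold in_Cplus, ff, gg. rewrite Cmult_eq, Cplus_eq. simpl. lra.
Qed.

Lemma Bf_C1 : C1_on OO Bf.
Proof.
  apply (C1_pair OO (fun x y => y / (1 + x)) (fun x y => 1 / (1 + x))
     (fun x y => - y / ((1 + x) * (1 + x))) (fun x y => - 1 / ((1 + x) * (1 + x)))
     (fun x y => 1 / (1 + x)) (fun x y => 0)).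
  - intros x y [[H1 H2] _]. simpl in *.
    split; [|split; [|split]]; auto_derive; try lra; try (field; lra).
  - intros x y [[H1 H2] _]. simpl in *.
    split; [|split; [|split]]; cont_tac; nra.
Qed.

Lemma Bg_C1 : C1_on OO Bg.
Proof.
  apply (C1_pair OO (fun x y => 1) (fun x y => 1)
     (fun x y => 0) (fun x y => 0) (fun x y => 0) (fun x y => 0)).
  - intros x y _. split; [|split; [|split]]; auto_derive; auto.
  - intros x y _. split; [|split; [|split]]; apply continuity_2d_pt_const.
Qed.

Lemma Bfg_C1 : C1_on OO Bfg.
Proof.
  unfold Bfg, QQ.
  apply (C1_pair OO (fun x y => (y - 1 + 2 * x * y) / (1 + 2 * x + 2 * x * x))
     (fun x y => (y + 1 + 2 * x) / (1 + 2 * x + 2 * x * x))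
     (fun x y => (2 * y * (1 + 2 * x + 2 * x * x) - (y - 1 + 2 * x * y) * (2 + 4 * x)) / ((1 + 2 * x + 2 * x * x) * (1 + 2 * x + 2 * x * x)))
     (fun x y => (2 * (1 + 2 * x + 2 * x * x) - (y + 1 + 2 * x) * (2 + 4 * x)) / ((1 + 2 * x + 2 * x * x) * (1 + 2 * x + 2 * x * x)))
     (fun x y => (1 + 2 * x) / (1 + 2 * x + 2 * x * x))
     (fun x y => 1 / (1 + 2 * x + 2 * x * x))).
  - intros x y _. pose proof (QQ_pos x) as HQ. unfold QQ in HQ.
    split; [|split; [|split]]; auto_derive; try lra; try (field; lra).
  - intros x y _. pose proof (QQ_pos x) as HQ. unfold QQ in HQ.
    split; [|split; [|split]]; cont_tac; nra.
Qed.

Ltac frac_lt N D :=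
  match goal with |- ?a < ?e => replace e with (N / D) by (field; lra);
    assert (HD : D > 0) by nra; apply (proj1 (Rlt_div_r a N D HD)); nra end.

Lemma Bf_sol : burgers_sol UU ff OO Bf.
Proof.
  split; [exact Bf_C1|].
  intros [x y] [[H1 H2] [H3 H4]]. simpl in *.
  unfold in_Cplus, UU, ff, Bf, RtoC. rewrite !Cminus_eq, !Cmult_eq, ?Cplus_eq. cbn [fst snd Im].
  split; [|split; [split|]].
  - apply Rdiv_lt_0_compat; lra.
  - frac_lt (-x) (1+x).
  - frac_lt (y-x) (1+x).
  - f_equal; field; lra.
Qed.

Lemma Bf_uniq : forall B', burgers_sol UU ff OO B' -> forall p, OO p -> B' p = Bf p.
Proof.
  intros B' [_ HB] [x y] Hp. destruct (HB _ Hp) as [_ [_ He]].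
  simpl in He. destruct (B' (x,y)) as [a b].
  unfold ff, RtoC in He. rewrite !Cminus_eq, !Cmult_eq, ?Cplus_eq in He. cbn [fst snd] in He.
  injection He as Ha Hb. destruct Hp as [[H1 H2] _]. simpl in *.
  unfold Bf; cbn [fst snd]. f_equal.
  - apply (Rmult_eq_reg_r (1 + x)); [|lra]. field_simplify; [|lra]. nra.
  - apply (Rmult_eq_reg_r (1 + x)); [|lra]. field_simplify; [|lra]. nra.
Qed.

Lemma Bg_sol : burgers_sol UU gg OO Bg.
Proof.
  split; [exact Bg_C1|].
  intros [x y] [[H1 H2] [H3 H4]]. simpl in *.
  unfold in_Cplus, UU, gg, Bg, RtoC. rewrite !Cminus_eq, !Cmult_eq. cbn [fst snd Im].
  split; [lra|split; [split; lra|reflexivity]].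
Qed.

Lemma Bg_uniq : forall B', burgers_sol UU gg OO B' -> forall p, OO p -> B' p = Bg p.
Proof.
  intros B' [_ HB] p Hp. destruct (HB _ Hp) as [_ [_ He]]. exact He.
Qed.

Lemma Bfg_sol : burgers_sol UU (fun z => Cmult (ff z) (gg z)) OO Bfg.
Proof.
  split; [exact Bfg_C1|].
  intros [x y] [[H1 H2] [H3 H4]]. simpl in *.
  pose proof (QQ_pos x) as HQ.
  unfold in_Cplus, UU, ff, gg, Bfg, RtoC. unfold QQ in *. rewrite !Cminus_eq, !Cmult_eq, ?Cplus_eq. cbn [fst snd Im].
  split; [|split; [split|]].
  - apply Rdiv_lt_0_compat; lra.
  - frac_lt (-(x*y + 2*x*x + x)) (1 + 2 * x + 2 * x * x).
  - frac_lt (y - 2*x*x) (1 + 2 * x + 2 * x * x).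
  - f_equal; field; lra.
Qed.

Lemma Bfg_uniq : forall B', burgers_sol UU (fun z => Cmult (ff z) (gg z)) OO B' -> forall p, OO p -> B' p = Bfg p.
Proof.
  intros B' [_ HB] [x y] Hp. destruct (HB _ Hp) as [_ [_ He]].
  simpl in He. destruct (B' (x,y)) as [a b].
  unfold ff, gg, RtoC in He. rewrite ?Cmult_eq, ?Cminus_eq, ?Cplus_eq, ?Cmult_eq in He. cbn [fst snd] in He.
  injection He as Ha Hb.
  pose proof (QQ_pos x) as HQ.
  unfold Bfg; cbn [fst snd]. unfold QQ in *. f_equal.
  - apply (Rmult_eq_reg_r (1 + 2 * x + 2 * x * x)); [|lra]. field_simplify; [|lra]. nra.
  - apply (Rmult_eq_reg_r (1 + 2 * x + 2 * x * x)); [|lra]. field_simplify; [|lra]. nra.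
Qed.

Theorem proposition7p1 :
  exists (U : C -> Prop) (f g : C -> C),
    admissible_domain U /\ holo_Cplus U f /\ holo_Cplus U g /\
    holo_Cplus U (fun z => Cmult (f z) (g z)) /\
    exists (x y : R) (Om : R * R -> Prop) (Bf Bg Bfg : R * R -> C),
      x <> 0 /\ Om (x, y) /\
      burgers_unique_on U f Om Bf /\
      burgers_unique_on U g Om Bg /\
      burgers_unique_on U (fun z => Cmult (f z) (g z)) Om Bfg /\
      Bfg (x, y) <> Cmult (Bf (x, y)) (Bg (x, y)).
Proof.
  exists UU, ff, gg.
  split; [|split; [exact holo_ff|split; [exact holo_gg|split; [exact holo_fg|]]]].
  - split; [exact UU_open|split; [exact UU_connected|]].
    exists 0, 1. split; [lra|]. intros t Ht. unfold UU, RtoC; simpl. lra.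
  - exists (1/20), 0, OO, Bf, Bg, Bfg.
    split; [lra|split; [unfold OO; simpl; lra|]].
    split; [split; [exact OO_open|split; [exact Bf_sol|exact Bf_uniq]]|].
    split; [split; [exact OO_open|split; [exact Bg_sol|exact Bg_uniq]]|].
    split; [split; [exact OO_open|split; [exact Bfg_sol|exact Bfg_uniq]]|].
    intro H. apply (f_equal fst) in H. unfold Bf, Bg, Bfg, QQ in H.
    rewrite Cmult_eq in H. cbn [fst snd] in H. field_simplify in H. lra.
Qed.
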